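(* Let the sequence $r$ on positive integers be defined by $r(1)=0$, $r(k)=\frac{3k}{2}+r(\frac{k}{2})$ if $k$ is even, and $r(k)=2+\frac{3(k-1)}{2}+r(\frac{k+1}{2})$ if $k\neq1$ is odd. Then for every positive integer $k$, $$r(k)\leq 3\left(2^{\lceil\log_2k\rceil}-1\right)<6k-3.$$ *)

(* Defs.v *)
From mathcomp Require Import all_boot.

(* Main.v *)
Require Import Defs.
From mathcomp Require Import all_boot.
From mathcomp Require Import zify.

Theorem lemma6 (r : nat -> nat)
  (r1 : r 1 = 0)
  (reven : forall k, 0 < k -> ~~ odd k -> r k = (3 * k) %/ 2 + r (k %/ 2))
  (rodd : forall k, 1 < k -> odd k -> r k = 2 + (3 * (k - 1)) %/ 2 + r ((k + 1) %/ 2))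
  (k : nat) : 0 < k ->
  r k <= 3 * (2 ^ up_log 2 k - 1) /\ 3 * (2 ^ up_log 2 k - 1) < 6 * k - 3.
Proof.
have main : forall e k, 0 < k -> k <= 2 ^ e -> r k <= 3 * (2 ^ e - 1).
  elim=> [|e IH] k0 Hk0 Hk.
    rewrite expn0 in Hk; have -> : k0 = 1 by apply/eqP; rewrite eqn_leq Hk Hk0.
    by rewrite r1.
  have He : 0 < 2 ^ e by rewrite expn_gt0.
  rewrite expnS in Hk *.
  case: (boolP (k0 == 1)) => [/eqP -> | Hn1]; first by rewrite r1.
  case: (boolP (odd k0)) => Ho.
    rewrite rodd //; last by lia.
    have Hm := IH ((k0 + 1) %/ 2).
    have Hk2 : k0 = 2 * (k0 %/ 2) + 1.
      by rewrite {1}(divn_eq k0 2) modn2 Ho; lia.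
    have Ha : (k0 + 1) %/ 2 = k0 %/ 2 + 1.
      by rewrite {1}Hk2 -addnA /= mulnC divnMDl.
    have Hb : (3 * (k0 - 1)) %/ 2 = 3 * (k0 %/ 2).
      by rewrite {1}Hk2 addnK mulnCA mulKn.
    rewrite Hb; rewrite Ha in Hm *.
    have := Hm ltac:(lia) ltac:(lia). lia.
  rewrite reven //.
  have Hk2 : k0 = 2 * (k0 %/ 2).
    by rewrite {1}(divn_eq k0 2) modn2 (negbTE Ho) addn0 mulnC.
  have Hb : (3 * k0) %/ 2 = 3 * (k0 %/ 2).
    by rewrite {1}Hk2 mulnCA mulKn.
  rewrite Hb.
  have := IH (k0 %/ 2) ltac:(lia) ltac:(lia). lia.
move=> Hk; split.
  by apply: main => //; apply: up_logP.
case: (boolP (k == 1)) => [/eqP -> | Hn1]; first by rewrite up_log1.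
have H1 := up_log_gtn (isT : 1 < 2) (_ : 1 < k).
have Hg : 0 < up_log 2 k by rewrite up_log_gt0; apply/andP; split => //; lia.
have := H1 ltac:(lia).
case: (up_log 2 k) Hg => [//|e] _ /=. rewrite expnS. lia.
Qed.
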